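(* Let $<$ be the usual strict order on $\mathbb{N}$, viewed as the relation $R$ with $R\,y\,x$ iff $y<x$. (1) If $R$ satisfies $\mathbf{WFmin}$, then every predicate $P$ on $\mathbb{N}$ is decidable: $P(n)\lor\lnot P(n)$ for all $n$. (2) If $R$ satisfies $\mathbf{WFminDNE}$, then every predicate $P$ on $\mathbb{N}$ is weakly decidable: $\lnot\lnot P(n)\lor\lnot P(n)$ for all $n$.
   Context: Work in constructive (intuitionistic) logic / Martin-Löf type theory without excluded middle or other axioms. For a relation $R$ on $A$ and a predicate $P\subseteq A$: $x$ is $P$-minimal if $x\in P$ and for all $y$, $R\,y\,x$ implies $y\notin P$. $P$ is $\lnot\lnot$-closed if $\lnot\lnot(x\in P)$ implies $x\in P$ for all $x$. $P$ is nonempty (inhabited) if there is $x\in P$. $\mathbf{WFmin}$: every nonempty $P\subseteq A$ has a $P$-minimal element. $\mathbf{WFminDNE}$: every nonempty $\lnot\lnot$-closed $P\subseteq A$ has a $P$-minimal element. *)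

(* Defs.v *)
From Stdlib Require Import Arith.

Definition minimal {A : Type} (R : A -> A -> Prop) (P : A -> Prop) (x : A) : Prop :=
  P x /\ (forall y, R y x -> ~ P y).

Definition notnot_closed {A : Type} (P : A -> Prop) : Prop :=
  forall x, ~ ~ P x -> P x.

Definition nonempty {A : Type} (P : A -> Prop) : Prop := exists x, P x.

Definition WFmin {A : Type} (R : A -> A -> Prop) : Prop :=
  forall P : A -> Prop, nonempty P -> exists x, minimal R P x.

Definition WFminDNE {A : Type} (R : A -> A -> Prop) : Prop :=
  forall P : A -> Prop, notnot_closed P -> nonempty P -> exists x, minimal R P x.

Definition ltR : nat -> nat -> Prop := fun y x => y < x.

(* Main.v *)
Require Import Defs.
From Stdlib Require Import Arith Lia.

Theorem mainTheorem13 :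
  (WFmin ltR -> forall (P : nat -> Prop) (n : nat), P n \/ ~ P n) /\
  (WFminDNE ltR -> forall (P : nat -> Prop) (n : nat), ~ ~ P n \/ ~ P n).
Proof.
  split.
  - intros H P n.
    destruct (H (fun k => (k = 0 /\ P n) \/ k = 1)) as [x [Hx Hm]].
    + exists 1; right; reflexivity.
    + destruct Hx as [[-> Hp] | ->].
      * left; exact Hp.
      * right; intro Hp. apply (Hm 0). unfold ltR; lia. left; auto.
  - intros H P n.
    destruct (H (fun k => (k = 0 /\ ~ ~ P n) \/ k = 1)) as [x [Hx Hm]].
    + intros [|[|k]] Hnn.
      * left; split; [reflexivity|]. intro Hnp. apply Hnn. intros [[_ h]|h]; [tauto|discriminate].
      * right; reflexivity.
      * exfalso; apply Hnn; intros [[h _]|h]; discriminate.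
    + exists 1; right; reflexivity.
    + destruct Hx as [[-> Hp] | ->].
      * left; exact Hp.
      * right; intro Hp. apply (Hm 0). unfold ltR; lia. left; auto.
Qed.
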